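(* Let $d$ be even, let $n>2d$ be prime, let $\omega=e^{2\pi i/n}$, and let $T$ be a $d\times d$ Cauchy matrix over $\mathbb{F}_n$. Define the $n^d\times n^d$ complex matrix $W_T$ by $(W_T)_{(i_1,\dots,i_d),(j_1,\dots,j_d)}=\omega^{(i_1,\dots,i_d)\,T\,(j_1,\dots,j_d)^{\top}}$ (the exponent computed in $\mathbb{F}_n$). Then for every $\kappa\subseteq[d]$, the matrix $W_T^{\top_\kappa}$ has rank $n^d$.
   Context: A Cauchy matrix over $\mathbb{F}_n$ is $T_{ab}=1/(x_a-y_b)$ for pairwise distinct elements $x_1,\dots,x_d,y_1,\dots,y_d\in\mathbb{F}_n$; every square submatrix of it is nonsingular. Indices $i_k,j_k\in[n]$ are regarded as elements of $\mathbb{F}_n$. For $k\in[d]$, $M^{\top_k}_{(i_1,\dots,i_d),(j_1,\dots,j_d)}=M_{(\dots,i_{k-1},j_k,i_{k+1},\dots),(\dots,j_{k-1},i_k,j_{k+1},\dots)}$ and $M^{\top_\kappa}$ composes these over $k\in\kappa$. *)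

(* Defs.v *)
From mathcomp Require Import all_boot all_order all_algebra.
From mathcomp Require Import reals trigo.
From mathcomp Require Import complex.
Set Implicit Arguments. Unset Strict Implicit. Unset Printing Implicit Defensive.
Import GRing.Theory Num.Theory.
Local Open Scope ring_scope.
Local Open Scope complex_scope.

(* Multi-indices (i_1,...,i_d) with i_k in [n], regarded as elements of F_n. *)
Definition midx (d n : nat) := {ffun 'I_d -> 'F_n}.

Definition omega (R : realType) (n : nat) : R[i] :=
  (cos (2 * pi / n%:R)) +i* (sin (2 * pi / n%:R)).

Definition cauchy_mx (n d : nat) (x y : 'I_d -> 'F_n) : 'M['F_n]_d :=
  \matrix_(a, b) (x a - y b)^-1.

Definition bilin (n d : nat) (T : 'M['F_n]_d) (i j : midx d n) : 'F_n :=
  \sum_(a < d) \sum_(b < d) i a * T a b * j b.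

Definition W_T (R : realType) (n d : nat) (T : 'M['F_n]_d)
  (i j : midx d n) : R[i] :=
  omega R n ^+ (nat_of_ord (bilin T i j)).

Definition ptrans (C : Type) (n d : nat) (kappa : {set 'I_d})
  (M : midx d n -> midx d n -> C) (i j : midx d n) : C :=
  M [ffun k => if k \in kappa then j k else i k]
    [ffun k => if k \in kappa then i k else j k].

Definition to_mx (C : Type) (n d : nat) (M : midx d n -> midx d n -> C)
  : 'M[C]_#|{: midx d n}| :=
  \matrix_(a, b) M (enum_val a) (enum_val b).

(* Main.v *)
Require Import Defs.
From mathcomp Require Import all_boot all_order all_algebra.
From mathcomp Require Import reals trigo.
From mathcomp Require Import complex.
From mathcomp Require Import ring lra zify.
Import Order.TTheory GRing.Theory Num.Theory.
Local Open Scope ring_scope.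
Local Open Scope complex_scope.

Lemma omega_pow (R : realType) n k :
  omega R n ^+ k = cos (k%:R * (2 * pi / n%:R)) +i* sin (k%:R * (2 * pi / n%:R)).
Proof.
elim: k => [|k IH]; first by rewrite expr0 !mul0r cos0 sin0.
rewrite exprS IH /omega; set t := 2 * pi / n%:R.
rewrite -[k.+1]addn1 natrD (mulrDl _ _ t) mul1r addrC cosD sinD.
by rewrite {1}/GRing.mul /= [X in _ +i* X]addrC.
Qed.

Lemma omega_n (R : realType) n : (0 < n)%N -> omega R n ^+ n = 1.
Proof.
move=> n0; have h : n%:R * (2 * pi / n%:R) = pi *+ 2 :> R.
  by rewrite mulrCA divff ?pnatr_eq0 -?lt0n // mulr1 mulr_natl.
by rewrite omega_pow h cos2pi sin2pi.
Qed.

Lemma omega_neq1 (R : realType) n : (1 < n)%N -> omega R n != 1.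
Proof.
case: n => [//|[//|[|m]]] _; apply/eqP.
- move=> /(congr1 (@complex.Re R)) /=.
  have -> : 2 * pi / 2%:R = pi :> R by rewrite mulrC mulKf ?pnatr_eq0.
  by rewrite cospi; lra.
- move=> h; have /= /eqP := congr1 (@complex.Im R) h; rewrite gt_eqF // sin_gt0_pi //.
  apply/andP; split.
    by apply: divr_gt0; [rewrite mulr_gt0 ?pi_gt0 | rewrite ltr0n].
  by rewrite ltr_pdivrMr ?ltr0n // [2 * pi]mulrC ltr_pM2l ?pi_gt0 // ltr_nat.
Qed.

Lemma omega_prim (R : realType) n : prime n -> n.-primitive_root (omega R n).
Proof.
move=> pn; have n0 := prime_gt0 pn.
have [m pm md] := prim_order_exists n0 (@omega_n R n n0).
case/primeP: pn => n1 hd; move: (hd _ md); case/orP=> /eqP m1; last by move: pm; rewrite m1.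
move: (prim_expr_order pm); rewrite m1 expr1 => w1.
by move: (@omega_neq1 R n n1); rewrite w1 eqxx.
Qed.

Section Char.
Variables (R : realType) (n : nat).
Hypothesis pn : prime n.

Lemma omegaN : omega R n ^+ (Zp_trunc (pdiv n)).+2 = 1.
Proof. by rewrite Fp_cast // omega_n // prime_gt0. Qed.

Definition ech (a : 'F_n) : R[i] := omega R n ^+ (nat_of_ord a).

Lemma ech0 : ech 0 = 1.
Proof. by rewrite /ech expr0. Qed.

Lemma echD a b : ech (a + b) = ech a * ech b.
Proof.
by rewrite /ech -exprD /= expr_mod ?omegaN.
Qed.

Lemma echM a b : ech (a * b) = (omega R n ^+ b) ^+ a.
Proof.
by rewrite /ech -exprM /= expr_mod ?omegaN // mulnC.
Qed.

Lemma ech_sum0 v : v != 0 -> \sum_(t : 'F_n) ech (t * v) = 0.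
Proof.
move=> v0; set z := omega R n ^+ v.
have z1 : z ^+ (Zp_trunc (pdiv n)).+2 = 1.
  by rewrite -exprM mulnC exprM omegaN expr1n.
have zn1 : z != 1.
  rewrite /z -(prim_order_dvd (@omega_prim R n pn)).
  have hv : (v < n)%N.
    by have := ltn_ord v; rewrite [X in (_ < X)%N]Fp_cast.
  have hv0 : (0 < v)%N.
    rewrite lt0n; move: v0; apply: contra => /eqP h; apply/eqP/val_inj.
    by rewrite /= h.
  by rewrite gtnNdvd.
rewrite (eq_bigr (fun t : 'F_n => z ^+ t)); last by move=> t _; rewrite echM.
have := subrX1 z (Zp_trunc (pdiv n)).+2; rewrite z1 subrr.
by move/esym/eqP; rewrite mulf_eq0 subr_eq0 (negbTE zn1) /= => /eqP.
Qed.
End Char.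
Lemma cauchy_ker (F : fieldType) (I : finType) (S : {set I}) (f g : I -> F)
  (c : I -> F) :
  injective f -> injective g -> (forall a b, f a != g b) ->
  (forall a, a \in S -> \sum_(b in S) c b / (f a - g b) = 0) ->
  forall b, b \in S -> c b = 0.
Proof.
move=> fi gi fg hS.
pose pr b := \prod_(b' in S :\ b) ('X - (g b')%:P).
pose P := \sum_(b in S) c b *: pr b.
have szpr b : b \in S -> (size (pr b) <= #|S|)%N.
  move=> bS; rewrite /pr size_prod; last by move=> i _; rewrite polyXsubC_eq0.
  rewrite (eq_bigr (fun _ => 2%N)); last by move=> i _; rewrite size_XsubC.
  rewrite sum_nat_const (cardsD1 b S) bS /=.
  have -> : #|in_mem^~ (mem (S :\ b))| = #|S :\ b| by [].
  lia.
have szP : (size P <= #|S|)%N.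
  rewrite /P; apply: (big_ind (fun p : {poly F} => (size p <= #|S|)%N)) => //.
  - by rewrite size_poly0.
  - by move=> p q hp hq; apply: leq_trans (size_polyD _ _) _; rewrite geq_max hp hq.
  - by move=> b bS; apply: leq_trans (size_scale_leq _ _) (szpr b bS).
have evpr b x : (pr b).[x] = \prod_(b' in S :\ b) (x - g b').
  by rewrite /pr horner_prod; apply: eq_bigr => i _; rewrite hornerXsubC.
have rootP a : a \in S -> P.[f a] = 0.
  move=> aS; rewrite /P horner_sum.
  have Q0 : \prod_(b' in S) (f a - g b') != 0.
    by apply/prodf_neq0 => i _; rewrite subr_eq0.
  transitivity (\prod_(b' in S) (f a - g b') * \sum_(b in S) c b / (f a - g b)); last by rewrite hS // mulr0.
  rewrite mulr_sumr; apply: eq_bigr => b bS; rewrite hornerZ evpr (bigD1 b bS) /=.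
  have fg0 : f a - g b != 0 by rewrite subr_eq0.
  rewrite [RHS]mulrC -mulrA [(f a - g b)^-1 * _]mulrA mulVf // mul1r.
  congr (_ * _); apply: eq_bigl => i; by rewrite !inE andbC.
have P0 : P = 0.
  apply/eqP; apply: contraT => Pn0.
  have := max_poly_roots Pn0 (rs := [seq f a | a <- enum S]).
  rewrite map_inj_uniq // enum_uniq size_map -cardE.
  have -> : all (root P) [seq f a | a <- enum S].
    by apply/allP => z /mapP [a]; rewrite mem_enum => aS ->; apply/eqP/rootP.
  by move=> /(_ isT isT); rewrite ltnNge szP.
move=> b0 b0S; have := congr1 (fun p => p.[g b0]) P0.
rewrite /= horner0 /P horner_sum (bigD1 b0 b0S) /= big1 ?addr0.
  rewrite hornerZ evpr => /eqP; rewrite mulf_eq0 => /orP [/eqP //|].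
  move/prodf_neq0 => h; exfalso; apply: h => i; rewrite !inE => /andP [ib0 _].
  by rewrite subr_eq0 eq_sym (inj_eq gi).
move=> b /andP [bS bb0]; rewrite hornerZ evpr (bigD1 b0) /= ?subrr ?mul0r ?mulr0 //.
by rewrite !inE eq_sym bb0.
Qed.
Section Decomp.
Variables (n d : nat) (T : 'M['F_n]_d) (kappa : {set 'I_d}).

Definition ipr (i j : midx d n) : midx d n := [ffun k => if k \in kappa then j k else i k].
Definition jpr (i j : midx d n) : midx d n := [ffun k => if k \in kappa then i k else j k].
Definition Ex i j := bilin T (ipr i j) (jpr i j).

Definition Cst (i l : midx d n) : 'F_n :=
  \sum_a \sum_b (if (a \notin kappa) && (b \in kappa) then
                  i a * T a b * i b - l a * T a b * l b else 0).

Definition psi (i l : midx d n) (k : 'I_d) : 'F_n :=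
  \sum_b ((if (k \in kappa) && (b \in kappa) then T k b * (i b - l b) else 0) +
          (if (k \notin kappa) && (b \notin kappa) then (i b - l b) * T b k else 0)).

Lemma Ex_diff i l j : Ex i j - Ex l j = Cst i l + \sum_k j k * psi i l k.
Proof.
rewrite /Ex /bilin -sumrB.
under eq_bigr => a _ do rewrite -sumrB.
have pt a b : ipr i j a * T a b * jpr i j b - ipr l j a * T a b * jpr l j b =
   (if (a \notin kappa) && (b \in kappa) then
                  i a * T a b * i b - l a * T a b * l b else 0)
   + ((if (a \in kappa) && (b \in kappa) then j a * (T a b * (i b - l b)) else 0)
   + (if (a \notin kappa) && (b \notin kappa) then j b * ((i a - l a) * T a b) else 0)).
  rewrite /ipr /jpr !ffunE.
  by case: (a \in kappa); case: (b \in kappa) => /=; ring.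
under eq_bigr => a _ do under eq_bigr => b _ do rewrite pt.
under eq_bigr => a _ do rewrite big_split /=.
rewrite big_split /=; congr (_ + _).
pose X a b := if (a \in kappa) && (b \in kappa) then j a * (T a b * (i b - l b)) else 0.
pose Y a b := if (a \notin kappa) && (b \notin kappa) then j b * ((i a - l a) * T a b) else 0.
transitivity (\sum_a \sum_b (X a b + Y b a)).
  under eq_bigr => a _ do rewrite big_split /=.
  rewrite big_split /=; under [in RHS]eq_bigr => a _ do rewrite big_split /=.
  rewrite [in RHS]big_split /=; congr (_ + _).
  by rewrite exchange_big.
apply: eq_bigr => k _; rewrite /psi mulr_sumr; apply: eq_bigr => b _.
rewrite mulrDr /X /Y.
by case: (k \in kappa); case: (b \in kappa) => /=; rewrite ?mulr0.
Qed.
End Decomp.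

Lemma psi_ker n d (x y : 'I_d -> 'F_n) (kappa : {set 'I_d}) (i l : midx d n) :
  injective x -> injective y -> (forall a b, x a != y b) ->
  (forall k, psi n d (cauchy_mx x y) kappa i l k = 0) -> i = l.
Proof.
move=> xi yi xy h; apply/ffunP => b.
apply/eqP; rewrite -subr_eq0; apply/eqP.
case bk: (b \in kappa).
- apply: (@cauchy_ker _ _ kappa x y (fun b => i b - l b)) => // a ak.
  transitivity (psi n d (cauchy_mx x y) kappa i l a); last exact: h a.
  rewrite /psi big_mkcond /=.
  apply: eq_bigr => c _; rewrite ak /= mxE.
  by case: (c \in kappa); rewrite /= ?addr0 // mulrC.
- have := @cauchy_ker _ _ (~: kappa) y x (fun b => - (i b - l b)) yi xi.
  move=> /(_ (fun a b => _)) H; apply/eqP; rewrite -oppr_eq0; apply/eqP; apply: H.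
  + by move=> a c; rewrite eq_sym.
  + move=> a; rewrite inE => ak; transitivity (psi n d (cauchy_mx x y) kappa i l a); last exact: h a.
    rewrite /psi big_mkcond /=.
    apply: eq_bigr => c _; rewrite (negbTE ak) inE /= mxE.
    case: (c \in kappa); rewrite /= ?add0r //.
    by rewrite -[y a - x c]opprB invrN mulrNN.
  + by rewrite in_setC bk.
Qed.

Theorem proposition6p8 (R : realType) (d n : nat) (x y : 'I_d -> 'F_n) :
  ~~ odd d -> prime n -> (2 * d < n)%N ->
  injective x -> injective y -> (forall a b, x a != y b) ->
  forall kappa : {set 'I_d},
    \rank (to_mx (ptrans kappa (W_T R (cauchy_mx x y)))) = (n ^ d)%N.
Proof.
move=> _ pn _ xi yi xy kappa.
set T := cauchy_mx x y.
set A := to_mx _.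
have card : #|{: midx d n}| = (n ^ d)%N by rewrite card_ffun card_Fp // card_ord.
pose c : R[i] := ((n ^ d)%:R)^-1.
pose E := Ex n d T kappa.
pose B : 'M[R[i]]_#|{: midx d n}| :=
  \matrix_(a, b) (c * ech R n (- E (enum_val b) (enum_val a))).
have AB : A *m B = 1%:M.
  apply/matrixP => a b; rewrite !mxE.
  transitivity (c * \sum_(z : midx d n) ech R n (E (enum_val a) z - E (enum_val b) z)).
    rewrite mulr_sumr (reindex (@enum_rank (midx d n))) /=; last first.
      exact: onW_bij _ (enum_rank_bij _).
    apply: eq_bigr => z _; rewrite !mxE enum_rankK echD //.
    by rewrite mulrCA.
  have [<-|ab] := eqVneq a b.
    under eq_bigr => z _ do rewrite subrr ech0.
    rewrite sumr_const card mulVf // pnatr_eq0 expn_eq0 negb_and.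
    by rewrite -lt0n prime_gt0.
  rewrite (_ : \sum_z _ = 0) ?mulr0 //.
  have il : enum_val a != enum_val b by rewrite (inj_eq enum_val_inj).
  have [k pk] : exists k, psi n d T kappa (enum_val a) (enum_val b) k != 0.
    apply/existsP; apply: contraR il => /existsPn h; apply/eqP.
    by apply: (@psi_ker n d x y kappa) => // k; apply/eqP/negbNE/h.
  under eq_bigr => z _ do rewrite /E Ex_diff echD //.
  rewrite -mulr_sumr (_ : \sum_z _ = 0) ?mulr0 //.
  under eq_bigr => z _ do rewrite (big_morph (ech R n) (echD R n pn) (ech0 R n)).
  rewrite -(bigA_distr_bigA (fun k t => ech R n (t * psi n d T kappa (enum_val a) (enum_val b) k))).
  by rewrite (bigD1 k) //= ech_sum0 // mul0r.
have [Au _] := mulmx1_unit AB.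
by rewrite mxrank_unit // card.
Qed.
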